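(* Let $n\ge0$ and $w,u\in S_n$. Assume that the compositions $\beta=(\beta_1,\dots,\beta_p):=\operatorname{cLRM}'(w)$ and $\gamma=(\gamma_1,\dots,\gamma_p):=\operatorname{cLRM}'(u)$ are anagrams of one another, and let $\chi\in S_p$ satisfy $\beta_{\chi(i)}=\gamma_i$ for each $i\in[p]$. Let $v\in S_n$ be a permutation that sends each $\operatorname{Set}(\gamma)_i$ to $\operatorname{Set}(\beta)_{\chi(i)}$ and has V-shape on each $\operatorname{Set}(\gamma)_i$ (equivalently, the word $\underline{v(1)}\,\underline{v(2)}\cdots\underline{v(n)}$ appears in the expansion of the product $V^{\operatorname{Set}(\beta)_{\chi(1)}}\cdots V^{\operatorname{Set}(\beta)_{\chi(p)}}$ in the free algebra). Assume that $vu=w$. Then $\chi=\mathrm{id}$, $v=\mathrm{id}$ and $\gamma=\beta$.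
   Context: $S_n$ is the symmetric group on $[n]$, with product $(uw)(i)=u(w(i))$. $\operatorname{LRM}(w)=\{i\in[n]: w(k)>i\text{ for all }k<w^{-1}(i)\}$ (left-to-right minima), $\operatorname{LRM}'(w)=\{\ell-1:\ell\in\operatorname{LRM}(w),\ \ell>1\}\subseteq[n-1]$, and $\operatorname{cLRM}'(w)=\operatorname{Comp}(\operatorname{LRM}'(w))$, where for $I=\{i_1<\cdots<i_{p-1}\}\subseteq[n-1]$, $\operatorname{Comp}(I)=(i_1-i_0,\dots,i_p-i_{p-1})$ with $i_0=0$, $i_p=n$. Compositions are anagrams if they have the same multiset of parts. For a composition $\alpha=(\alpha_1,\dots,\alpha_p)$ of $n$, $\alpha_{\le i}=\alpha_1+\cdots+\alpha_i$ and $\operatorname{Set}(\alpha)_i=\{\alpha_{\le i-1}+1,\dots,\alpha_{\le i}\}$. A permutation $v$ has V-shape on an interval $\{i,i+1,\dots,j\}$ if there is $m$ with $i\le m\le j$ and $v(i)>v(i+1)>\cdots>v(m)<v(m+1)<\cdots<v(j)$. In the free algebra over letters $\underline1,\dots,\underline n$, $[a,b]=ab-ba$ and for nonempty $S\subseteq[n]$ with elements $s_1<\cdots<s_k$, $V^S=[[\cdots[\underline{s_1},\underline{s_2}],\dots],\underline{s_k}]$. *)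

(* Defs.v *)
(* Conventions: [n] = {1,...,n} is encoded as 'I_n via
   k |-> k-1 (0-based).  S_n is 'S_n = {perm 'I_n}. *)
From mathcomp Require Import all_boot all_order all_fingroup.
Set Implicit Arguments. Unset Strict Implicit. Unset Printing Implicit Defensive.

Definition LRM n (w : 'S_n) : {set 'I_n} :=
  [set i : 'I_n | [forall k : 'I_n, (k < (w^-1)%g i) ==> (i < w k)]].

(* LRM'(w) = {l-1 : l in LRM(w), l > 1}.  If l is 1-based, its 0-based code
   is l-1, so LRM'(w) is the increasing list of 0-based codes i > 0 of LRM(w)
   (read as elements of [n-1]). *)
Definition LRMp n (w : 'S_n) : seq nat :=
  [seq val i | i <- enum 'I_n & (i \in LRM w) && (0 < val i)].

Definition Comp (n : nat) (I : seq nat) : seq nat :=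
  pairmap (fun a b => b - a) 0 (rcons I n).

Definition cLRMp n (w : 'S_n) : seq nat := Comp n (LRMp w).

(* Set(alpha)_i, with i 0-based (i.e. the paper's Set(alpha)_{i+1}) and
   entries 0-based: {alpha_{<= i} + 1, ..., alpha_{<= i+1}} shifted by -1. *)
Definition SetC n (alpha : seq nat) (i : nat) : {set 'I_n} :=
  [set x : 'I_n | (sumn (take i alpha) <= x) && (x < sumn (take i.+1 alpha))].

Definition Vshape n (v : 'S_n) (S : {set 'I_n}) : Prop :=
  exists2 m, m \in S &
    (forall x y : 'I_n, x \in S -> y \in S -> x < y -> y <= m -> v y < v x) /\
    (forall x y : 'I_n, x \in S -> y \in S -> m <= x -> x < y -> v x < v y).

(* Main.v *)
Require Import Defs.
From mathcomp Require Import all_boot all_order all_fingroup.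
From mathcomp Require Import zify.
Set Implicit Arguments. Unset Strict Implicit. Unset Printing Implicit Defensive.

Section H.
Variable n : nat.
Implicit Types w u v : 'S_n.

Lemma LRMp_sorted w : sorted ltn (LRMp w).
Proof.
rewrite /LRMp sorted_map; apply: sorted_filter.
  by move=> a b c /=; apply: ltn_trans.
by rewrite -sorted_map val_enum_ord; apply: iota_ltn_sorted.
Qed.

Lemma LRMp_mem1 w a : a \in LRMp w -> exists2 x : 'I_n, val x = a & (x \in LRM w) && (0 < a).
Proof.
by case/mapP=> x; rewrite mem_filter => /andP[/andP[Hx H0] _] ->; exists x; rewrite ?Hx.
Qed.

Lemma LRMp_mem2 w (x : 'I_n) : x \in LRM w -> 0 < x -> val x \in LRMp w.
Proof. by move=> Hx H0; apply: map_f; rewrite mem_filter Hx H0 mem_enum. Qed.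

Lemma LRMp_lt w a : a \in LRMp w -> 0 < a < n.
Proof. by case/LRMp_mem1 => x <- /andP[_ ->]; rewrite ltn_ord. Qed.

Lemma s_sorted w : 0 < n -> sorted ltn (0 :: rcons (LRMp w) n).
Proof.
move=> n0 /=; rewrite rcons_path (path_sortedE ltn_trans) LRMp_sorted andbT.
apply/andP; split.
  by apply/allP => a /LRMp_lt /andP[].
have := mem_last 0 (LRMp w); rewrite inE => /orP[/eqP -> //|].
by move/LRMp_lt => /andP[].
Qed.

Definition Bs w i := nth 0 (0 :: rcons (LRMp w) n) i.

Lemma size_cLRMp w : size (cLRMp w) = (size (LRMp w)).+1.
Proof. by rewrite /cLRMp /Comp size_pairmap size_rcons. Qed.

Lemma Bs_lt w i j : 0 < n -> i < j -> j <= size (cLRMp w) -> Bs w i < Bs w j.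
Proof.
move=> n0 ij jp; rewrite /Bs; apply: (sorted_ltn_nth ltn_trans) => //.
  by apply: s_sorted.
  by rewrite inE /= size_rcons -size_cLRMp; lia.
by rewrite inE /= size_rcons -size_cLRMp; lia.
Qed.

Lemma Bs_le w i j : 0 < n -> i <= j -> j <= size (cLRMp w) -> Bs w i <= Bs w j.
Proof.
move=> n0; rewrite leq_eqVlt => /orP[/eqP -> //|ij jp].
by apply: ltnW; apply: Bs_lt.
Qed.

Lemma Bs_top w : Bs w (size (cLRMp w)) = n.
Proof. by rewrite size_cLRMp /Bs /= nth_rcons ltnn eqxx. Qed.

Lemma Bs0 w : Bs w 0 = 0.
Proof. by []. Qed.

Lemma sumn_take_pm l a i : path leq a l -> i <= size l ->
  sumn (take i (pairmap (fun a b => b - a) a l)) + a = nth 0 (a :: l) i.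
Proof.
elim: l a i => [|b l IH] a [|i] //=.
move=> /andP[ab pl] hi; rewrite -(IH b i pl hi); lia.
Qed.

Lemma SetCE w i (x : 'I_n) : 0 < n -> i < size (cLRMp w) ->
  (x \in SetC n (cLRMp w) i) = (Bs w i <= x) && (x < Bs w i.+1).
Proof.
move=> n0 hi; rewrite inE /cLRMp /Comp.
have ps : path leq 0 (rcons (LRMp w) n).
  by have := sub_sorted (fun a b => @ltnW a b) (s_sorted w n0).
move: hi; rewrite size_cLRMp => hi.
rewrite -[sumn (take i _)]addn0 -[sumn (take i.+1 _)]addn0.
rewrite !sumn_take_pm // ?size_rcons //; lia.
Qed.

Lemma nthCE w i : 0 < n -> i < size (cLRMp w) ->
  nth 0 (cLRMp w) i = Bs w i.+1 - Bs w i.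
Proof.
move=> n0 hi; rewrite /cLRMp /Comp (nth_pairmap 0) //; last first.
by move: hi; rewrite size_cLRMp size_rcons.
Qed.


Lemma LRME w (x : 'I_n) :
  (x \in LRM w) = [forall k : 'I_n, (k < (w^-1)%g x) ==> (x < w k)].
Proof. by rewrite inE. Qed.

Lemma Bs_LRM w i : 0 < n -> i < size (cLRMp w) ->
  exists2 x : 'I_n, val x = Bs w i & x \in LRM w.
Proof.
move=> n0; case: i => [|j] hi.
  exists (Ordinal n0) => //; rewrite LRME; apply/forallP => k; apply/implyP => hk.
  rewrite lt0n; apply/negP => /eqP h0.
  have : w k = Ordinal n0 by apply: val_inj.
  move/(congr1 (w^-1)%g); rewrite permK => hk'.
  by move: hk; rewrite -hk' ltnn.
move: hi; rewrite size_cLRMp ltnS => hj.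
have : Bs w j.+1 \in LRMp w by rewrite /Bs /= nth_rcons hj mem_nth.
by case/LRMp_mem1 => x hx /andP[hl _]; exists x.
Qed.

Lemma LRM_Bs w (x : 'I_n) : x \in LRM w ->
  exists2 i, i < size (cLRMp w) & val x = Bs w i.
Proof.
move=> hx; case: (posnP x) => [h0|hpos]; first by exists 0; [rewrite size_cLRMp | exact: h0].
have hm := LRMp_mem2 hx hpos.
exists (index (val x) (LRMp w)).+1; first by rewrite size_cLRMp ltnS index_mem.
by rewrite /Bs /= nth_rcons index_mem hm nth_index.
Qed.

Lemma LRM_first w (t : nat) (j : 'I_n) : w j < t ->
  exists j' : 'I_n, [/\ j' <= j, w j' < t & w j' \in LRM w].
Proof.
move=> hj.
case: (@arg_minnP _ j (fun j' => w j' < t) (fun j' : 'I_n => val j') hj) => j' h1 h2.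
exists j'; split => //; first exact: h2.
rewrite LRME permK; apply/forallP => k; apply/implyP => hk.
rewrite ltnNge; apply/negP => hle.
have : j' <= k by apply: h2; apply: leq_ltn_trans h1.
by rewrite leqNgt hk.
Qed.

Lemma G_lemma w k (c : 'I_n) : 0 < n -> k < size (cLRMp w) ->
  val c = Bs w k -> c \in LRM w ->
  forall j : 'I_n, j < (w^-1)%g c -> Bs w k.+1 <= w j.
Proof.
move=> n0 hk hc hcL j hj; rewrite leqNgt; apply/negP => hlt.
case: (LRM_first hlt) => j' [hj'j hj't hL].
case: (LRM_Bs hL) => i hi hwi.
have hj'q : j' < (w^-1)%g c by apply: leq_ltn_trans hj.
move: hcL; rewrite LRME => /forallP /(_ j') /implyP /(_ hj'q).
rewrite hc hwi => hlt2.
have hik : i <= k.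
  rewrite leqNgt; apply/negP => hki.
  have := Bs_le n0 hki (ltnW hi); rewrite -hwi leqNgt hj't //.
have := Bs_le n0 hik (ltnW hk); rewrite leqNgt hlt2 //.
Qed.

Lemma mono_lemma v (lo hi : nat) :
  (forall x y : 'I_n, lo <= x -> x < y -> y < hi -> v x < v y) ->
  forall d (x y : 'I_n), lo <= x -> y < hi -> val y = x + d -> v x + d <= v y.
Proof.
move=> hm; elim=> [|d IH] x y hx hy hxy.
  by rewrite addn0 (_ : y = x) //; apply: val_inj; rewrite hxy addn0.
have hy' : y.-1 < n by apply: leq_ltn_trans (leq_pred _) (ltn_ord y).
have := IH x (Ordinal hy') hx (leq_ltn_trans (leq_pred _) hy) ltac:(rewrite /= hxy addnS //).
have := hm (Ordinal hy') y ltac:(rewrite /= hxy addnS /=; lia) ltac:(rewrite /= hxy; lia) hy.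
lia.
Qed.

End H.

Theorem lemma5p2 (n p : nat) (w u v : 'S_n) (chi : 'S_p) :
  size (cLRMp w) = p ->
  size (cLRMp u) = p ->
  perm_eq (cLRMp w) (cLRMp u) ->
  (forall i : 'I_p, nth 0 (cLRMp w) (chi i) = nth 0 (cLRMp u) i) ->
  (forall (i : 'I_p) (x : 'I_n),
      x \in SetC n (cLRMp u) i -> v x \in SetC n (cLRMp w) (chi i)) ->
  (forall i : 'I_p, Vshape v (SetC n (cLRMp u) i)) ->
  (forall x : 'I_n, v (u x) = w x) ->
  [/\ chi = 1%g, v = 1%g & cLRMp u = cLRMp w].
Proof.
move=> Hw Hu _ Hnth Hblk HV Hvu.
case: (posnP n) => [n0|n0].
  subst n.
  have hs : size (LRMp w) = 0.
    apply/eqP; rewrite -leqn0 /LRMp size_map.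
    by rewrite size_filter; apply: leq_trans (count_size _ _) _; rewrite size_enum_ord.
  move: Hw; rewrite size_cLRMp hs => hp; clear Hu; subst p.
  have hv : v = 1%g by apply/permP => -[].
  have hwu : w = u by apply/permP => x; rewrite -Hvu hv perm1.
  split => //; last by rewrite hwu.
  by apply/permP => i; apply: val_inj; rewrite perm1 (ord1 (chi i)) (ord1 i).
pose Q k := [/\ (forall i : 'I_p, k <= i -> chi i = i), Bs u k = Bs w k &
                (forall x : 'I_n, Bs u k <= x -> v x = x)].
have Qp : Q p.
  split.
  - by move=> i; rewrite leqNgt ltn_ord.
  - by rewrite -{1}Hu -Hw !Bs_top.
  - by move=> x; rewrite -{1}Hu Bs_top leqNgt ltn_ord.
have step : forall k, k < p -> Q k.+1 -> Q k.
  move=> k hk [chiIH eqt vIH].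
  pose ki : 'I_p := Ordinal hk.
  have hku : k < size (cLRMp u) by rewrite Hu.
  have hkw : k < size (cLRMp w) by rewrite Hw.
  set t := Bs u k.+1.
  have ltu : Bs u k < t by apply: Bs_lt; rewrite // Hu.
  have ltw : Bs w k < Bs w k.+1 by apply: Bs_lt; rewrite // Hw.
  have tn : t <= n by rewrite /t -{2}(Bs_top u) Hu; apply: Bs_le; rewrite // Hu.
  case: (Bs_LRM n0 hku) => c hc hcL.
  case: (Bs_LRM n0 hkw) => b hb hbL.
  have vlt : forall y : 'I_n, y < t -> v y < t.
    move=> y hy; rewrite ltnNge; apply/negP => hle.
    have := vIH (v y) hle => /perm_inj hvy.
    by move: hy; rewrite -hvy ltnNge hle.
  have Gu := G_lemma n0 hku hc hcL.
  have Gw := G_lemma n0 hkw hb hbL.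
  have wu : forall j : 'I_n, j < (u^-1)%g c -> t <= w j.
    by move=> j hj; rewrite -Hvu vIH; apply: Gu.
  have wq1 : w ((u^-1)%g c) < t by rewrite -Hvu permKV; apply: vlt; rewrite hc.
  have wq2 : w ((w^-1)%g b) < t by rewrite permKV hb /t eqt.
  have qeq : (u^-1)%g c = (w^-1)%g b.
    apply: val_inj; case: (ltngtP (val ((u^-1)%g c)) (val ((w^-1)%g b))) => // h.
    - by have := Gw _ h; rewrite -eqt leqNgt wq1.
    - by have := wu _ h; rewrite leqNgt wq2.
  have vcb : v c = b by rewrite -[c](permKV u) Hvu qeq permKV.
  have cin : c \in SetC n (cLRMp u) ki by rewrite SetCE //= hc leqnn ltu.
  have hchi_lt : chi ki < size (cLRMp w) by rewrite Hw ltn_ord.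
  have vcin := Hblk ki c cin.
  move: (vcin); rewrite SetCE // vcb hb => /andP[h1 h2].
  have chik : val (chi ki) = k.
    case: (ltngtP (chi ki) k) => // h.
    - by have := Bs_le n0 h (ltnW hkw); rewrite leqNgt h2.
    - by have := Bs_lt n0 h (ltnW hchi_lt); rewrite ltnNge h1.
  have chik' : chi ki = ki by apply: val_inj.
  have inCk : forall x : 'I_n, (x \in SetC n (cLRMp u) ki) = (Bs u k <= x) && (x < t).
    by move=> x; rewrite SetCE.
  have inBk : forall x : 'I_n, x \in SetC n (cLRMp u) ki -> (Bs w k <= v x) && (v x < Bs w k.+1).
    by move=> x /(Hblk ki); rewrite chik' SetCE // ?Hw.
  case: (HV ki) => m hm [dec inc].
  have hmv : val m = Bs u k.
    move: (hm); rewrite inCk => /andP[hm1 _].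
    apply/eqP; rewrite eqn_leq hm1 andbT leqNgt; apply/negP => hlt.
    rewrite -hc in hlt.
    have := dec c m cin hm hlt (leqnn _).
    rewrite vcb hb; move: (inBk m hm) => /andP[hh _].
    by rewrite ltnNge hh.
  have inc' : forall x y : 'I_n, Bs u k <= x -> x < y -> y < t -> v x < v y.
    move=> x y hx hxy hy; apply: inc.
    - by rewrite inCk hx; apply: ltn_trans hy.
    - by rewrite inCk hy (leq_trans hx (ltnW hxy)).
    - by rewrite hmv.
    - exact: hxy.
  have eqk : Bs u k = Bs w k.
    have := Hnth ki; rewrite chik' /= !nthCE //; rewrite /t in eqt ltu *; lia.
  have t1n : t.-1 < n by lia.
  have top : forall x : 'I_n, Bs u k <= x -> x < t -> v x = x.
    move=> x hx hxt; apply: val_inj => /=.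
    have lo := mono_lemma inc' (d := x - Bs u k) (x := c) (y := x) ltac:(rewrite hc //) hxt ltac:(by rewrite hc subnKC).
    have hy : Ordinal t1n \in SetC n (cLRMp u) ki by rewrite inCk /=; lia.
    have hi := mono_lemma inc' (d := t.-1 - x) (x := x) (y := Ordinal t1n) hx ltac:(rewrite /=; lia) ltac:(rewrite /=; lia).
    move: (inBk _ hy) => /andP[_ hvy].
    move: lo; rewrite vcb hb -eqk => lo.
    rewrite -/t in hvy. move: hvy; rewrite -eqt => hvy. lia.
  split.
  - move=> i hi; case: (ltngtP k i) => h.
    + by apply: chiIH.
    + by move: hi; rewrite leqNgt h.
    + by rewrite (_ : i = ki) //; apply: val_inj.
  - exact: eqk.
  - move=> x hx; case: (ltnP x t) => hxt; first exact: top.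
    exact: vIH.
have Q0 : Q 0.
  have : forall d, d <= p -> Q (p - d).
    elim => [|d IH] hd; first by rewrite subn0.
    have hk : p - d.+1 < p by lia.
    apply: step => //; rewrite (_ : (p - d.+1).+1 = p - d); last lia.
    by apply: IH; lia.
  by move/(_ p (leqnn p)); rewrite subnn.
case: Q0 => chi0 _ v0.
have hv : v = 1%g by apply/permP => x; rewrite perm1 v0 // /Bs.
have hwu : w = u by apply/permP => x; rewrite -Hvu hv perm1.
split => //; last by rewrite hwu.
by apply/permP => i; rewrite perm1 chi0.
Qed.
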